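(* Let $\mathfrak L$ be a left-resolving $\lambda$-graph system over a finite alphabet $\Sigma$ which satisfies condition (I). Then $\mathfrak L$ is essentially free, i.e. for all $m\neq n$ in $\mathbb Z_+$ the set $X_{m,n}=\{x\in X_{\mathfrak L}\mid \sigma_{\mathfrak L}^m(x)=\sigma_{\mathfrak L}^n(x)\}$ has empty interior in $X_{\mathfrak L}$.
   Context: $\mathbb Z_+=\{0,1,2,\dots\}$, $\mathbb N=\{1,2,\dots\}$. A $\lambda$-graph system $\mathfrak L=(V,E,\lambda,\iota)$ over a finite alphabet $\Sigma$ consists of finite nonempty pairwise disjoint vertex sets $V_l$ ($l\in\mathbb Z_+$), $V=\bigcup_l V_l$; finite pairwise disjoint edge sets $E_{l,l+1}$, $E=\bigcup_l E_{l,l+1}$, each $e\in E_{l,l+1}$ having a source $s(e)\in V_l$ and a terminal $t(e)\in V_{l+1}$; a labeling map $\lambda:E\to\Sigma$; and surjections $\iota=\iota_{l,l+1}:V_{l+1}\to V_l$; such that every vertex is the source of some edge, every vertex in $V_l$ with $l\ge1$ is the terminal of some edge, and (local property) for all $l\ge1$, $u\in V_{l-1}$, $v\in V_{l+1}$ there is a label-preserving bijection between $\{e\in E_{l,l+1}: \iota(s(e))=u,\ t(e)=v\}$ and $\{e\in E_{l-1,l}: s(e)=u,\ t(e)=\iota(v)\}$. It is left-resolving if $e,f\in E$, $t(e)=t(f)$, $\lambda(e)=\lambda(f)$ imply $e=f$. $\Omega_{\mathfrak L}=\{(u^l)_{l\in\mathbb Z_+}\in\prod_l V_l: \iota(u^{l+1})=u^l\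 \forall l\}$ with the projective limit topology. $E_{\mathfrak L}$ is the set of $(u,\alpha,w)\in\Omega_{\mathfrak L}\times\Sigma\times\Omega_{\mathfrak L}$ such that for each $l$ there is $e\in E_{l,l+1}$ with $s(e)=u^l$, $t(e)=w^{l+1}$, $\lambda(e)=\alpha$. $X_{\mathfrak L}$ is the set of sequences $(\alpha_i,u_i)_{i\in\mathbb N}\in\prod_{i\in\mathbb N}(\Sigma\times\Omega_{\mathfrak L})$ with $(u_i,\alpha_{i+1},u_{i+1})\in E_{\mathfrak L}$ for all $i\in\mathbb N$ and $(u_0,\alpha_1,u_1)\in E_{\mathfrak L}$ for some $u_0\in\Omega_{\mathfrak L}$, with the relative product topology; $\sigma_{\mathfrak L}((\alpha_i,u_i)_{i\in\mathbb N})=(\alpha_{i+1},u_{i+1})_{i\in\mathbb N}$. Condition (I): for every $l\in\mathbb Z_+$ and $v\in V_l$, the set $\Gamma^+_\infty(v)\subset\Sigma^{\mathbb N}$ of all sequences $(\alpha_1,\alpha_2,\dots)$ for which there are edges $e_{n,n+1}\in E_{n,n+1}$ ($n\ge l$) with $s(e_{l,l+1})=v$, $t(e_{n,n+1})=s(e_{n+1,n+2})$ and $\lambda(e_{n,n+1})=\alpha_{n-l+1}$ for all $n\ge l$, contains at least two distinct sequences. *)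

(* Defs.v *)
From mathcomp Require Import all_boot.
Set Implicit Arguments.
Unset Strict Implicit.
Unset Printing Implicit Defensive.

(* Raw data of a lambda-graph system over the alphabet Sigma.
   V l, Edge l are the finite sets V_l, E_{l,l+1} (disjointness is automatic,
   as they live in different types). *)
Record lgraph (Sigma : finType) := LGraph {
  V    : nat -> finType;
  Edge : nat -> finType;
  src  : forall l, Edge l -> V l;
  trm  : forall l, Edge l -> V l.+1;
  lab  : forall l, Edge l -> Sigma;
  iota : forall l, V l.+1 -> V l }.

Arguments V {Sigma} _ _ : rename.
Arguments Edge {Sigma} _ _ : rename.
Arguments src {Sigma} _ {_} _ : rename.
Arguments trm {Sigma} _ {_} _ : rename.
Arguments lab {Sigma} _ {_} _ : rename.
Arguments iota {Sigma} _ {_} _ : rename.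

Section LGS.
Variables (Sigma : finType) (g : lgraph Sigma).

Definition is_lambda_graph_system : Prop :=
  [/\ (forall l, 0 < #|V g l|),
      (forall l (u : V g l), exists v : V g l.+1, iota g v = u),
      (forall l (v : V g l), exists e : Edge g l, src g e = v),
      (forall l (v : V g l.+1), exists e : Edge g l, trm g e = v) &
      (* local property, for level l = k.+1 >= 1, u in V_k, v in V_{k+2} *)
      (forall k (u : V g k) (v : V g k.+2),
         exists f : {e : Edge g k.+1 | (iota g (src g e) == u) && (trm g e == v)} ->
                    {e : Edge g k    | (src g e == u) && (trm g e == iota g v)},
           bijective f /\ forall e, lab g (val (f e)) = lab g (val e))].

Definition left_resolving : Prop :=
  forall l (e f : Edge g l), trm g e = trm g f -> lab g e = lab g f -> e = f.

(* Gamma^+_infty(v) for v in V_l; the n-th edge lives in E_{l+n,l+n+1}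
   (written Nat.add n l so that successor levels are convertible). *)
Definition Gamma_inf (l : nat) (v : V g l) (a : nat -> Sigma) : Prop :=
  exists e : forall n, Edge g (Nat.add n l),
    [/\ src g (e 0) = v,
        (forall n, trm g (e n) = src g (e n.+1)) &
        (forall n, lab g (e n) = a n)].

Definition condition_I : Prop :=
  forall l (v : V g l), exists a b, a <> b /\ Gamma_inf v a /\ Gamma_inf v b.

Definition vseq := forall l, V g l.
Definition in_Omega (u : vseq) : Prop := forall l, iota g (u l.+1) = u l.

Definition E_L (u : vseq) (a : Sigma) (w : vseq) : Prop :=
  forall l, exists e : Edge g l, [/\ src g e = u l, trm g e = w l.+1 & lab g e = a].

(* Points of the ambient product prod_{i in N} (Sigma x prod_l V_l);
   index i : nat here stands for i+1 in the paper. *)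
Definition point := nat -> (Sigma * vseq)%type.

Definition in_XL (x : point) : Prop :=
  (forall i, in_Omega (x i).2) /\
  (forall i, E_L (x i).2 (x i.+1).1 (x i.+1).2) /\
  (exists u0, in_Omega u0 /\ E_L u0 (x 0).1 (x 0).2).

Definition sigmaL (x : point) : point := fun i => x i.+1.

(* Basic neighbourhoods of the (relative) product topology: agreement of the
   labels and of the vertex coordinates of levels <= L in the first N slots. *)
Definition near (N L : nat) (x y : point) : Prop :=
  forall i, i < N -> (y i).1 = (x i).1 /\ forall l, l <= L -> (y i).2 l = (x i).2 l.

Definition open_in_XL (U : point -> Prop) : Prop :=
  (forall x, U x -> in_XL x) /\
  (forall x, U x -> exists N L, forall y, in_XL y -> near N L x y -> U y).

Definition X_mn (m n : nat) (x : point) : Prop :=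
  in_XL x /\ iter m sigmaL x = iter n sigmaL x.

Definition empty_interior (A : point -> Prop) : Prop :=
  forall U, open_in_XL U -> (forall x, U x -> A x) -> forall x, ~ U x.

Definition essentially_free : Prop :=
  forall m n : nat, m <> n -> empty_interior (X_mn m n).

End LGS.

(* Main.v *)
From Stdlib Require Import Classical ClassicalEpsilon FunctionalExtensionality Lia.
Require Import Defs.
From mathcomp Require Import all_boot zify.

Set Implicit Arguments.
Unset Strict Implicit.
Unset Printing Implicit Defensive.

Lemma fchoice (A : Type) (B : A -> Type) (P : forall a, B a -> Prop) :
  (forall a, exists b, P a b) -> exists f : forall a, B a, forall a, P a (f a).
Proof.
move=> H; exists (fun a => proj1_sig (constructive_indefinite_description _ (H a))).
move=> a; exact: (proj2_sig (constructive_indefinite_description _ (H a))).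
Qed.

Lemma finite_bound (F : finType) (Q : F -> nat -> Prop) :
  (forall b, exists M, Q b M) -> (forall b M M', M <= M' -> Q b M -> Q b M') ->
  exists M, forall b, Q b M.
Proof.
move=> H Hmon.
have [f Hf] := @fchoice F (fun _ => nat) Q H.
exists (\max_(b : F) f b) => b; apply: Hmon (Hf b); exact: leq_bigmax.
Qed.

Lemma koenig (T : nat -> finType) (R : forall h, T h -> T h.+1 -> Prop) (r : T 0) :
  (forall H, exists q : forall i, T i, q 0 = r /\ forall j, j < H -> R j (q j) (q j.+1)) ->
  exists q : forall i, T i, q 0 = r /\ forall j, R j (q j) (q j.+1).
Proof.
move=> Hch.
pose good h (a : T h) := forall H, exists q : forall i, T i,
  q h = a /\ forall j, h <= j -> j < h + H -> R j (q j) (q j.+1).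
have g0 : good 0 r.
  move=> H; have [q [q0 Hq]] := Hch H; exists q; split => // j _; exact: Hq.
have step : forall h (a : T h), good h a -> exists b, R h a b /\ good h.+1 b.
  move=> h a ga; apply: NNPP => Hn.
  have Hb : forall b : T h.+1, exists M, R h a b -> ~ (exists q : forall i, T i,
       q h.+1 = b /\ forall j, h.+1 <= j -> j < h.+1 + M -> R j (q j) (q j.+1)).
    move=> b; case: (classic (R h a b)) => Rb; last by exists 0.
    have : ~ good h.+1 b by move=> gb; apply: Hn; exists b.
    move=> /not_all_ex_not [M HM]; exists M => _; exact: HM.
  have := finite_bound Hb; case.
    move=> b M1 M2 le12 HQ Rb [q [qb Hq]]; apply: (HQ Rb); exists q; split => //.
    move=> j hj jlt; apply: Hq => //; lia.
  move=> M HM.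
  have [q [qa Hq]] := ga M.+1.
  have Rb : R h a (q h.+1) by rewrite -qa; apply: Hq => //; lia.
  apply: (HM (q h.+1) Rb); exists q; split => // j hj jlt; apply: Hq; lia.
pose sf h (s : {a : T h | good h a}) : {b : T h.+1 | R h (proj1_sig s) b /\ good h.+1 b} :=
  constructive_indefinite_description _ (step h (proj1_sig s) (proj2_sig s)).
pose fix ch h : {a : T h | good h a} :=
  match h as h0 return {a : T h0 | good h0 a} with
  | 0 => exist _ r g0
  | h'.+1 => let s := sf h' (ch h') in exist _ (proj1_sig s) (proj2 (proj2_sig s))
  end.
exists (fun i => proj1_sig (ch i)); split => // j.
exact: (proj1 (proj2_sig (sf j (ch j)))).
Qed.
Lemma pred_ex (Sigma : finType) (g : lgraph Sigma) :
  is_lambda_graph_system g -> left_resolving g ->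
  forall (w : vseq g) (a : Sigma), in_Omega w ->
  (exists j (e : Edge g j), trm g e = w j.+1 /\ lab g e = a) ->
  exists u, [/\ in_Omega u, E_L u a w &
     forall j (e : Edge g j), trm g e = w j.+1 -> lab g e = a -> src g e = u j].
Proof.
move=> [_ _ _ _ Hloc] Hlr w a Hw [j0 [e0 [He0 Hl0]]].
have proj : forall j (f : Edge g j.+1), trm g f = w j.+2 -> lab g f = a ->
    exists e : Edge g j, [/\ src g e = Defs.iota g (src g f), trm g e = w j.+1 & lab g e = a].
  move=> j f Hf Hlf.
  have [F [_ HF]] := Hloc j (Defs.iota g (src g f)) (w j.+2).
  have Pf : (Defs.iota g (src g f) == Defs.iota g (src g f)) && (trm g f == w j.+2).
    by rewrite Hf !eqxx.
  move: (HF (exist _ f Pf)); case: (F (exist _ f Pf)) => e /= /andP [/eqP H1 /eqP H2] Hl.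
  exists e; split => //; first by rewrite H2 Hw.
  by rewrite Hl.
have lift : forall j (e : Edge g j), trm g e = w j.+1 -> lab g e = a ->
    exists f : Edge g j.+1, trm g f = w j.+2 /\ lab g f = a.
  move=> j e He Hle.
  have [F [[G FG GF] HF]] := Hloc j (src g e) (w j.+2).
  have Pe : (src g e == src g e) && (trm g e == Defs.iota g (w j.+2)).
    by rewrite He Hw !eqxx.
  set s := G (exist _ e Pe).
  have := HF s; rewrite /s GF /=.
  case: (G (exist _ e Pe)) => f /= /andP [_ /eqP H2] Hl.
  by exists f; split => //; rewrite -Hl.
pose P j := exists e : Edge g j, trm g e = w j.+1 /\ lab g e = a.
have Pdown : forall d j, P (j + d) -> P j.
  elim=> [|d IH] j; first by rewrite addn0.
  rewrite addnS => -[f [Hf Hlf]]; apply: IH.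
  by have [e [_ He Hle]] := proj _ f Hf Hlf; exists e.
have Pup : forall d, P (j0 + d).
  elim=> [|d IH]; first by rewrite addn0; exists e0.
  rewrite addnS; case: IH => e [He Hle]; exact: lift He Hle.
have Pall : forall j, P j.
  move=> j; case: (leqP j j0) => Hj.
    by apply: (Pdown (j0 - j)); rewrite subnKC; [by exists e0|].
  by rewrite -(subnKC (ltnW Hj)).
have [E HE] := @fchoice nat (fun j => Edge g j) _ Pall.
exists (fun j => src g (E j)); split.
- move=> j; have [Hf Hlf] := HE j.+1.
  have [e [H1 H2 H3]] := proj _ _ Hf Hlf.
  have [He Hle] := HE j.
  have -> : E j = e by apply: Hlr; rewrite ?He ?H2 ?Hle ?H3.
  by rewrite H1.
- move=> j; exists (E j); have [He Hle] := HE j; split => //.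
- move=> j e He Hle; have [He' Hle'] := HE j.
  have -> // : e = E j by apply: Hlr; rewrite ?He ?He' ?Hle ?Hle'.
Qed.

Definition shiftg (Sigma : finType) (g : lgraph Sigma) : lgraph Sigma :=
  @LGraph Sigma (fun l => V g l.+1) (fun l => Edge g l.+1) (fun l e => src g e)
    (fun l e => trm g e) (fun l e => lab g e) (fun l v => Defs.iota g v).

Lemma omega_ext (Sigma : finType) k : forall (g : lgraph Sigma),
  (forall l (u : V g l), exists v : V g l.+1, Defs.iota g v = u) ->
  forall z : V g k, exists u : vseq g, in_Omega u /\ u k = z.
Proof.
elim: k => [|k IH] g Hs z.
  have [pre Hpre] : exists pre : forall l, V g l -> V g l.+1,
      forall l u, Defs.iota g (pre l u) = u.
    apply: (@fchoice nat (fun l => V g l -> V g l.+1) (fun l f => forall u, Defs.iota g (f u) = u)) => l; exact: (@fchoice (V g l) (fun _ => V g l.+1) _ (Hs l)).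
  pose fix tw l : V g l := match l as l0 return V g l0 with 0 => z | l'.+1 => pre l' (tw l') end.
  by exists tw; split => // l /=; rewrite Hpre.
have Hs' : forall l (u : V (shiftg g) l), exists v : V (shiftg g) l.+1,
    Defs.iota (shiftg g) v = u by move=> l u; exact: Hs.
have [u' [Hu' Hz]] := IH (shiftg g) Hs' z.
exists (fun l => match l as l0 return V g l0 with 0 => Defs.iota g (u' 0) | l'.+1 => u' l' end).
split => //; case=> [|l] //=; exact: Hu'.
Qed.

Lemma omega_low (Sigma : finType) (g : lgraph Sigma) (u u' : vseq g) :
  in_Omega u -> in_Omega u' -> forall k, u k = u' k -> forall k', k' <= k -> u k' = u' k'.
Proof.
move=> Hu Hu'.
have H : forall d k', u (k' + d) = u' (k' + d) -> u k' = u' k'.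
  elim=> [|d IH] k'; first by rewrite addn0.
  rewrite addnS => E; apply: (IH k'); have := f_equal (Defs.iota g) E; by rewrite Hu Hu'.
move=> k E k' Hk; apply: (H (k - k')); by rewrite subnKC.
Qed.

Lemma unq_back (Sigma : finType) (g : lgraph Sigma) : left_resolving g ->
  forall (c : nat -> Sigma) (W1 W2 : nat -> vseq g) d j k,
  (forall i, j <= i -> i < j + d -> E_L (W1 i) (c i) (W1 i.+1) /\ E_L (W2 i) (c i) (W2 i.+1)) ->
  W1 (j + d) (k + d) = W2 (j + d) (k + d) -> W1 j k = W2 j k.
Proof.
move=> Hlr c W1 W2; elim=> [|d IH] j k HE; first by rewrite !addn0.
rewrite !addnS -!addSn => E.
have E1 : W1 j.+1 k.+1 = W2 j.+1 k.+1.
  apply: (IH j.+1 k.+1) => // i h1 h2; apply: HE; [exact: ltnW | by rewrite addnS -addSn].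
have [H1 H2] : E_L (W1 j) (c j) (W1 j.+1) /\ E_L (W2 j) (c j) (W2 j.+1).
  by apply: HE => //; rewrite addnS ltnS leq_addr.
have [e1 [s1 t1 l1]] := H1 k; have [e2 [s2 t2 l2]] := H2 k.
rewrite -s1 -s2; congr (src g _); apply: Hlr; by rewrite ?t1 ?t2 ?E1 ?l1 ?l2.
Qed.

Fixpoint twl (l h : nat) : nat := if h is h'.+1 then (twl l h').+2 else l.

Lemma twl_ge l h : h + h <= twl l h.
Proof. elim: h => [|h IH] //=; rewrite addnS addSn; lia. Qed.

Lemma finite_future (Sigma : finType) (g : lgraph Sigma) :
  is_lambda_graph_system g -> left_resolving g ->
  forall l (v : V g l) (c : nat -> Sigma), Gamma_inf v c ->
  forall H, exists w : nat -> vseq g, [/\ (forall j, in_Omega (w j)),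
     (forall j, j < H -> E_L (w j) (c j) (w j.+1)) & w 0 l = v].
Proof.
move=> Hg Hlr l v c [e [He0 Het Hel]] H.
have Hs := Hg; case: Hs => [_ Hs _ _ _].
have D : forall r d, d + r = H -> exists w : nat -> vseq g, [/\ (forall j, in_Omega (w j)),
     (forall j, d <= j -> j < H -> E_L (w j) (c j) (w j.+1)) & w d (Nat.add d l) = src g (e d)].
  elim=> [|r IH] d Hd.
    rewrite addn0 in Hd; subst d.
    have [u [Hu Hz]] := omega_ext Hs (src g (e H)).
    exists (fun _ => u); split => // j h1 h2; lia.
  have Hd' : d.+1 + r = H by rewrite addSn -addnS.
  have [w [Hw HwE Hwd]] := IH d.+1 Hd'.
  have [u [Hu HuE Huq]] := pred_ex Hg Hlr (Hw d.+1)
     (ex_intro _ (Nat.add d l) (ex_intro _ (e d) (conj (etrans (Het d) (esym Hwd)) (Hel d)))).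
  exists (fun j => if j == d then u else w j); split.
  - by move=> j; case: (j == d).
  - move=> j h1 h2; case: (eqVneq j d) => [->|Hjd] /=.
      by rewrite (gtn_eqF (ltnSn d)).
    have Hj1 : (j.+1 == d) = false by apply/eqP; lia.
    rewrite Hj1; apply: HwE => //; by rewrite ltn_neqAle eq_sym Hjd h1.
  - rewrite eqxx; symmetry; apply: Huq; [exact: (etrans (Het d) (esym Hwd)) | exact: Hel].
have [w [Hw HwE Hw0]] := D H 0 (add0n H).
exists w; split => //; [move=> j hj; exact: HwE | exact: (etrans Hw0 He0)].
Qed.

Lemma future (Sigma : finType) (g : lgraph Sigma) :
  is_lambda_graph_system g -> left_resolving g ->
  forall l (v : V g l) (c : nat -> Sigma), Gamma_inf v c ->
  exists w : nat -> vseq g, [/\ (forall j, in_Omega (w j)),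
     (forall j, E_L (w j) (c j) (w j.+1)) & w 0 l = v].
Proof.
move=> Hg Hlr l v c Hgam.
have Hs := Hg; case: Hs => [_ Hs _ _ _].
pose R h (a : V g (twl l h)) (b : V g (twl l h.+1)) :=
  exists f : Edge g (twl l h).+1, [/\ trm g f = b, lab g f = c h & Defs.iota g (src g f) = a].
have [q [q0 Hq]] : exists q : forall h, V g (twl l h), q 0 = v /\ forall j, R j (q j) (q j.+1).
  apply: (@koenig (fun h => V g (twl l h)) R v) => H.
  have [w [Hw HwE Hw0]] := finite_future Hg Hlr Hgam H.
  exists (fun h => w h (twl l h)); split => // j hj.
  have [f [s1 t1 l1]] := HwE j hj (twl l j).+1.
  by exists f; split => //; rewrite s1 Hw.
have RW : forall H, exists W : nat -> vseq g, [/\ (forall j, in_Omega (W j)),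
     (forall j, j < H -> E_L (W j) (c j) (W j.+1)) & forall h, h <= H -> W h (twl l h) = q h].
  move=> H.
  have D : forall r d, d + r = H -> exists W : nat -> vseq g, [/\ (forall j, in_Omega (W j)),
     (forall j, d <= j -> j < H -> E_L (W j) (c j) (W j.+1)) &
     forall h, d <= h -> h <= H -> W h (twl l h) = q h].
    elim=> [|r IH] d Hd.
      rewrite addn0 in Hd; subst d.
      have [u [Hu Hz]] := omega_ext Hs (q H).
      exists (fun _ => u); split => // [j h1 h2|h h1 h2]; first lia.
      by have -> : h = H by apply/eqP; rewrite eqn_leq h1 h2.
    have Hd' : d.+1 + r = H by rewrite addSn -addnS.
    have [W [Hw HwE Hwd]] := IH d.+1 Hd'.
    have [f [t1 l1 s1]] := Hq d.
    have Hdl : d.+1 <= H by rewrite -Hd'; exact: leq_addr.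
    have Hf : trm g f = W d.+1 (twl l d).+2 by rewrite t1 (Hwd d.+1).
    have [u [Hu HuE Huq]] := pred_ex Hg Hlr (Hw d.+1)
       (ex_intro _ (twl l d).+1 (ex_intro _ f (conj Hf l1))).
    exists (fun j => if j == d then u else W j); split.
    - by move=> j; case: (j == d).
    - move=> j h1 h2; case: (eqVneq j d) => [->|Hjd] /=.
        by rewrite (gtn_eqF (ltnSn d)).
      have Hj1 : (j.+1 == d) = false by apply/eqP; lia.
      rewrite Hj1; apply: HwE => //; by rewrite ltn_neqAle eq_sym Hjd h1.
    - move=> h h1 h2; case: (eqVneq h d) => [->|Hhd] /=.
        by rewrite -s1 (Huq _ f Hf l1) Hu.
      apply: Hwd => //; by rewrite ltn_neqAle eq_sym Hhd h1.
  have [W [Hw HwE Hw0]] := D H 0 (add0n H).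
  by exists W; split => // [j hj|h hh]; [apply: HwE | apply: Hw0].
have [WW HWW] := @fchoice nat (fun _ => nat -> vseq g) _ RW.
have cons : forall H1 H2 j k, j + k <= H1 -> j + k <= H2 -> WW H1 j k = WW H2 j k.
  move=> H1 H2 j k h1 h2.
  have [Hw1 HE1 Hq1] := HWW H1; have [Hw2 HE2 Hq2] := HWW H2.
  have E : WW H1 (j + k) (twl l (j + k)) = WW H2 (j + k) (twl l (j + k)).
    by rewrite Hq1 // Hq2.
  have E2 : WW H1 (j + k) (k + k) = WW H2 (j + k) (k + k).
    apply: (omega_low (Hw1 _) (Hw2 _) E).
    have := twl_ge l (j + k); lia.
  apply: (unq_back Hlr (c := c) (d := k)) E2 => i hi1 hi2; split.
  - apply: HE1; lia.
  - apply: HE2; lia.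
exists (fun j k => WW (j + k) j k); split.
- move=> j k /=.
  have [Hw _ _] := HWW (j + k.+1).
  rewrite Hw; apply: cons => //; lia.
- move=> j k.
  have [_ HE _] := HWW (j.+1 + k.+1).
  have [e [s1 t1 l1]] := HE j ltac:(lia) k.
  exists e; split => //.
  rewrite s1; apply: cons; lia.
- have [_ _ Hq0] := HWW (0 + l).
  by rewrite /= (Hq0 0) // q0.
Qed.

Lemma iter_sig (Sigma : finType) (g : lgraph Sigma) k (x : point g) i :
  iter k (@sigmaL _ g) x i = x (i + k).
Proof.
elim: k i => [|k IH] i; first by rewrite addn0.
by rewrite iterS /sigmaL IH addSnnS.
Qed.

Lemma per_agree (T : Type) (f h : nat -> T) m n K : m < n -> n <= K ->
  (forall j, f (j + m) = f (j + n)) -> (forall j, h (j + m) = h (j + n)) ->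
  (forall i, i <= K -> f i = h i) -> forall i, f i = h i.
Proof.
move=> Hmn HnK Hf Hh Hag i.
elim: i {-2}i (leqnn i) => [|i IH] k Hk.
  by apply: Hag; lia.
case: (leqP k K) => HkK; first exact: Hag.
have -> : k = (k - n) + n by lia.
rewrite -Hf -Hh; apply: IH; lia.
Qed.

Lemma main_lt (Sigma : finType) (g : lgraph Sigma) :
  is_lambda_graph_system g -> left_resolving g -> condition_I g ->
  forall m n, m < n -> empty_interior (X_mn (g := g) m n).
Proof.
move=> Hg Hlr HI m n Hmn U [_ HUo] HUX x Ux.
have [N [L HN]] := HUo x Ux.
have [HxXL Hxit] := HUX x Ux.
have [HxO [HxE Hx0]] := HxXL.
have Hxp : forall j, x (j + m) = x (j + n).
  move=> j; have := f_equal (fun f => f j) Hxit; by rewrite !iter_sig.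
pose K := N + n. pose L' := L.+1.
pose v := (x K).2 (K + L').
have [a [b [Hab [Ga Gb]]]] := HI (K + L') v.
pose t := fun j => (x (K.+1 + j)).1.
have [c [Gc Hct]] : exists c, Gamma_inf v c /\ c <> t.
  case: (classic (a = t)) => Ha; last by exists a.
  by exists b; split => // Hb; apply: Hab; rewrite Ha Hb.
have [w [Hw HwE Hw0]] := future Hg Hlr Gc.
pose laby k := if k <= K then (x k).1 else c (k - K.+1).
have S : forall r i, i + r = K -> exists Z : nat -> vseq g, [/\ (forall j, in_Omega (Z j)),
    (forall j, E_L (Z j) (laby (i + j).+1) (Z j.+1)) &
    (forall j, i + j <= K -> Z j (i + j + L') = (x (i + j)).2 (i + j + L'))].
  elim=> [|r IH] i Hi.
  - rewrite addn0 in Hi; subst i; exists w; split => //.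
    + move=> j; rewrite /laby leqNgt ltnS leq_addr /= subSS addKn; exact: HwE.
    + move=> j hj; have j0 : j = 0 by lia.
      subst j; rewrite addn0; exact: Hw0.
  - have Hi' : i.+1 + r = K by rewrite addSn -addnS.
    have [Z [HZ HZE HZi]] := IH i.+1 Hi'.
    have [e [s1 t1 l1]] := HxE i (i + L').
    have HZ0 := HZi 0 ltac:(lia); rewrite addn0 in HZ0.
    have Ht : trm g e = Z 0 (i + L').+1 by exact: (etrans t1 (esym HZ0)).
    have [u [Hu HuE Huq]] := pred_ex Hg Hlr (HZ 0)
       (ex_intro _ (i + L') (ex_intro _ e (conj Ht l1))).
    exists (fun j => if j is j'.+1 then Z j' else u); split.
    + by case.
    + case=> [|j].
        rewrite addn0 /laby; have -> : (i.+1 <= K) = true by apply/idP; lia.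
        exact: HuE.
      by rewrite addnS -addSn; exact: HZE.
    + case=> [|j] hj.
        by rewrite addn0 -(Huq _ e Ht l1) s1.
      rewrite addnS -addSn; apply: HZi; lia.
have [Z [HZ HZE HZi]] := S K 0 (add0n K).
pose y : point g := fun j => (laby j, Z j).
have Hy : in_XL y.
  split; first exact: HZ.
  split; first by move=> j; have := HZE j; rewrite add0n.
  have [u0 [Hu0 Hu0E]] := Hx0.
  have [e [s1 t1 l1]] := Hu0E L.
  have HZ0 := HZi 0 ltac:(lia).
  have Ht : trm g e = Z 0 L.+1 by exact: (etrans t1 (esym HZ0)).
  have [u [Hu HuE _]] := pred_ex Hg Hlr (HZ 0)
       (ex_intro _ L (ex_intro _ e (conj Ht l1))).
  by exists u; split.
have Hnear : near N L x y.
  move=> i hi; split.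
    by rewrite /= /laby; have -> : (i <= K) = true by apply/idP; lia.
  move=> k hk; have := HZi i ltac:(lia); rewrite add0n => H.
  apply: (omega_low (HZ i) (HxO i) H); lia.
have [_ Hyit] := HUX y (HN y Hy Hnear).
have Hyp : forall j, y (j + m) = y (j + n).
  move=> j; have := f_equal (fun f => f j) Hyit; by rewrite !iter_sig.
have Hag := @per_agree _ (fun k => (y k).1) (fun k => (x k).1) m n K Hmn ltac:(lia)
  (fun j => f_equal fst (Hyp j)) (fun j => f_equal fst (Hxp j)).
apply: Hct; apply: functional_extensionality => j.
have := Hag _ (K.+1 + j); rewrite /= /laby leqNgt ltnS leq_addr /= addKn; apply.
by move=> i hi; rewrite /= /laby hi.
Qed.

Theorem mainTheorem1 (Sigma : finType) (g : lgraph Sigma) :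
  is_lambda_graph_system g -> left_resolving g -> condition_I g ->
  essentially_free g.
Proof.
move=> Hg Hlr HI m n Hmn.
case: (ltngtP m n) => H; first exact: main_lt.
- move=> U HU HUX; apply: (main_lt Hg Hlr HI H HU) => x Ux.
  by have [H1 H2] := HUX x Ux; split.
- by case: Hmn; apply/eqP; rewrite H.
Qed.
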